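(* Assume $\rho_\alpha^{\mathrm{dir}}<1$, let $\theta^\star$ be the unique projected Bellman fixed point, and let $x_k:=\theta_k-\theta^\star$. Then for each $k\ge0$ there exists an $\mathcal F_k$-measurable stochastic policy $\mu_k$ such that \[ x_{k+1}=A_{\mu_k}x_k+\alpha w_k\quad\text{for all }k\ge0, \] where $w_k:=\widehat g_k(\theta_k)-g(\theta_k)$ satisfies $\mathbb E[w_k\mid\mathcal F_k]=0$.
   Context: Consider a finite discounted MDP with state space $\mathcal S=\{1,\dots,|\mathcal S|\}$, action space $\mathcal A=\{1,\dots,|\mathcal A|\}$, transition probabilities $P(s'\mid s,a)$, real rewards $r(s,a,s')$, expected reward $R(s,a)=\sum_{s'}P(s'\mid s,a)r(s,a,s')$, and discount factor $\gamma\in(0,1)$. State-action vectors are ordered as $(1,1),(2,1),\dots,(|\mathcal S|,1),(1,2),\dots$. The matrix $P\in\mathbb R^{|\mathcal S||\mathcal A|\times|\mathcal S|}$ has rows $P(\cdot\mid s,a)$, and $R$ has entries $R(s,a)$. A stochastic policy is a map $\mu:\mathcal S\to\Delta_{|\mathcal A|}$. The matrix $\Pi^\mu\in\mathbb R^{|\mathcal S|\times|\mathcal S||\mathcal A|}$ has entry $\mu(a\mid s)$ at row $s$, column $(s,a)$, and zeros elsewhere. The set $\Theta$ is the set of deterministic stationary policies, viewed as stochastic policies. The feature matrix $\Phi\in\mathbb R^{|\mathcal S||\mathcal A|\times m}$ has full column rank and rows $\phi(s,a)^\top$. Define $V_\theta(s):=\max_a\phi(s,a)^\top\theta$. The distribution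 $d$ on $\mathcal S\times\mathcal A$ satisfies $d>0$ everywhere, and $D=\mathrm{diag}(d)$. The step size is $\alpha\in(0,1)$. Define $g(\theta):=\Phi^\top D(R+\gamma PV_\theta-\Phi\theta)$. A projected Bellman fixed point is a $\theta^\star$ with $g(\theta^\star)=0$. Define $A_\mu:=I-\alpha\Phi^\top D\Phi+\alpha\gamma\Phi^\top DP\Pi^\mu\Phi$. Let $\rho_\alpha^{\mathrm{dir}}:=\lim_k\max_{\pi_i\in\Theta}\|A_{\pi_k}\cdots A_{\pi_1}\|^{1/k}$ be the joint spectral radius of $\{A_\pi:\pi\in\Theta\}$. When $\rho_\alpha^{\mathrm{dir}}<1$ a unique projected Bellman fixed point exists. i.i.d. sampling: $\theta_0$ is deterministic. At each time $k$, $(s_k,a_k)$ is drawn independently according to $d$, then $s'_k\sim P(\cdot\mid s_k,a_k)$, and $r_{k+1}:=r(s_k,a_k,s'_k)$. The filtration is $\mathcal F_0=\sigma(\theta_0)$ and $\mathcal F_k=\sigma(\theta_0,\{(s_t,a_t,s'_t,r_{t+1}):t\le k-1\})$. Define \[ \widehat g_k(\theta):=\phi(s_k,a_k)\Big(r_{k+1}+\gamma\max_u\phi(s'_k,u)^\top\theta-\phi(s_k,a_k)^\top\theta\Big), \] and the update $\theta_{k+1}=\theta_k+\alpha\widehat g_k(\theta_k)$. *)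

(* Defs.v *)
From HB Require Import structures.
From mathcomp Require Import all_boot all_order all_algebra.
From mathcomp Require Import all_classical all_reals all_analysis.
Set Implicit Arguments. Unset Strict Implicit. Unset Printing Implicit Defensive.
Import Order.TTheory GRing.Theory Num.Theory.
Import numFieldNormedType.Exports.
Local Open Scope classical_set_scope.
Local Open Scope ring_scope.

Section QLearning.
Variables (R : realType) (nS nA m : nat).

(* index of the state-action pair (s,a) in the ordering
   (1,1),(2,1),...,(|S|,1),(1,2),... : a * |S| + s *)
Definition sa_idx (s : 'I_nS) (a : 'I_nA) : 'I_(nA * nS) := mxvec_index a s.

Definition sa_col (f : 'I_nS -> 'I_nA -> R) : 'cV[R]_(nA * nS) :=
  (mxvec (\matrix_(a < nA, s < nS) f s a))^T.

Definition fmax (T : finType) (f : T -> R) : R :=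
  match [pick i : T] with
  | Some i0 => \big[Num.max/f i0]_(i : T) f i
  | None => 0
  end.

Definition is_stoch_policy (mu : 'I_nS -> 'I_nA -> R) : Prop :=
  (forall s a, 0 <= mu s a) /\ (forall s, \sum_(a < nA) mu s a = 1).

Definition det_policy (pi : {ffun 'I_nS -> 'I_nA}) : 'I_nS -> 'I_nA -> R :=
  fun s a => if a == pi s then 1 else 0.

Variables (Pt : 'I_nS -> 'I_nA -> 'I_nS -> R) (r : 'I_nS -> 'I_nA -> 'I_nS -> R)
  (gamma alpha : R) (Phi : 'M[R]_(nA * nS, m)) (d : 'I_nS -> 'I_nA -> R).

Definition Pmat : 'M[R]_(nA * nS, nS) :=
  \matrix_(i, s') (sa_col (fun s a => Pt s a s')) i 0.

Definition Rexp (s : 'I_nS) (a : 'I_nA) : R := \sum_(s' < nS) Pt s a s' * r s a s'.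
Definition Rvec : 'cV[R]_(nA * nS) := sa_col Rexp.

Definition Dmat : 'M[R]_(nA * nS) := diag_mx (sa_col d)^T.

(* Pi^mu : entry mu(a|s) at row s, column (s,a) *)
Definition Pimat (mu : 'I_nS -> 'I_nA -> R) : 'M[R]_(nS, nA * nS) :=
  \matrix_(s, i) (sa_col (fun s2 a => if s2 == s then mu s a else 0)) i 0.

Definition phi (s : 'I_nS) (a : 'I_nA) : 'cV[R]_m := (row (sa_idx s a) Phi)^T.

Definition qval (theta : 'cV[R]_m) (s : 'I_nS) (a : 'I_nA) : R :=
  (row (sa_idx s a) Phi *m theta) 0 0.

Definition Vth (theta : 'cV[R]_m) (s : 'I_nS) : R := fmax (qval theta s).
Definition Vvec (theta : 'cV[R]_m) : 'cV[R]_nS := \col_s Vth theta s.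

Definition gfun (theta : 'cV[R]_m) : 'cV[R]_m :=
  Phi^T *m Dmat *m (Rvec + gamma *: (Pmat *m Vvec theta) - Phi *m theta).

Definition Amat (mu : 'I_nS -> 'I_nA -> R) : 'M[R]_m :=
  1%:M - alpha *: (Phi^T *m Dmat *m Phi)
       + (alpha * gamma) *: (Phi^T *m Dmat *m Pmat *m Pimat mu *m Phi).

(* joint spectral radius of {A_pi : pi in Theta} (with the max-entry matrix
   norm; the value of the limit does not depend on the norm) *)
Definition jsr : R :=
  limn (fun k : nat =>
    (\big[Num.max/0]_(ps : {ffun 'I_k -> {ffun 'I_nS -> 'I_nA}})
        `| \prod_(i < k) Amat (det_policy (ps (rev_ord i))) | ) `^ (k%:R^-1)).

Definition ghat (s : 'I_nS) (a : 'I_nA) (s' : 'I_nS) (theta : 'cV[R]_m) : 'cV[R]_m :=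
  (r s a s' + gamma * Vth theta s' - qval theta s a) *: phi s a.

End QLearning.

Section Process.
Variables (R : realType) (nS nA m : nat) (Omega : Type)
  (Pt : 'I_nS -> 'I_nA -> 'I_nS -> R) (r : 'I_nS -> 'I_nA -> 'I_nS -> R)
  (gamma alpha : R) (Phi : 'M[R]_(nA * nS, m))
  (theta0 : 'cV[R]_m)
  (st : nat -> Omega -> 'I_nS) (at_ : nat -> Omega -> 'I_nA)
  (st' : nat -> Omega -> 'I_nS).

Fixpoint theta (k : nat) (w : Omega) : 'cV[R]_m :=
  match k with
  | 0 => theta0
  | k'.+1 => theta k' w
             + alpha *: ghat r gamma Phi (st k' w) (at_ k' w) (st' k' w) (theta k' w)
  end.

Definition hist (k : nat) (w : Omega) : {ffun 'I_k -> 'I_nS * 'I_nA * 'I_nS} :=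
  [ffun t : 'I_k => (st t w, at_ t w, st' t w)].

(* F_k = sigma(theta_0, (s_t,a_t,s'_t,r_{t+1})_{t<=k-1}); theta_0 is deterministic
   and r_{t+1} is a function of (s_t,a_t,s'_t), so F_k is the sigma-algebra
   generated by the finite-valued random variable hist k *)
Definition inF (k : nat) (A : set Omega) : Prop :=
  exists B : set {ffun 'I_k -> 'I_nS * 'I_nA * 'I_nS},
    A = [set w | B (hist k w)].

Definition F_measurable (k : nat) (f : Omega -> R) : Prop :=
  forall B : set R, measurable B -> inF k (f @^-1` B).

End Process.

(* Main.v *)
Require Import Defs.
From HB Require Import structures.
From mathcomp Require Import all_boot all_order all_algebra.
From mathcomp Require Import all_classical all_reals all_analysis.
Import Order.TTheory GRing.Theory Num.Theory.
Import numFieldNormedType.Exports.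
Local Open Scope classical_set_scope.
Local Open Scope ring_scope.
Set Implicit Arguments. Unset Strict Implicit. Unset Printing Implicit Defensive.
From mathcomp Require Import ring lra.
Section Alg.
Variables (R : realType) (nS nA m : nat).

Lemma sa_colE (f : 'I_nS -> 'I_nA -> R) s a : sa_col f (sa_idx s a) 0 = f s a.
Proof. by rewrite /sa_col /sa_idx mxE mxvecE mxE. Qed.

Lemma sum_sa (F : 'I_(nA * nS) -> R) :
  \sum_i F i = \sum_s \sum_a F (sa_idx s a).
Proof.
rewrite (reindex (uncurry (@mxvec_index nA nS))) /=; last exact: curry_mxvec_bij.
rewrite exchange_big pair_bigA /=.
by apply: eq_bigr => -[a s].
Qed.

Lemma fmax_ex (f : 'I_nA -> R) : (0 < nA)%N ->
  exists a, fmax f = f a /\ forall b, f b <= f a.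
Proof.
move=> nA0; rewrite /fmax; case: pickP => [i0 _|]; last first.
  by move=> /(_ (Ordinal nA0)).
have [a ha] : exists a, \big[Num.max/f i0]_i f i = f a.
  apply: (big_ind (fun x => exists a, x = f a)); first by exists i0.
    move=> x y [a ->] [b ->]; rewrite /Num.max; case: ifP => _.
      by exists b. by exists a.
  by move=> i _; exists i.
exists a; split => // b; rewrite -ha (bigD1 b) //=.
by rewrite le_max lexx.
Qed.

Lemma qvalE (Phi : 'M[R]_(nA * nS, m)) th s a :
  qval Phi th s a = (Phi *m th) (sa_idx s a) 0.
Proof. by rewrite /qval -row_mul mxE. Qed.

Lemma Pimat_mul (mu : 'I_nS -> 'I_nA -> R) (v : 'cV[R]_(nA * nS)) s :
  (Pimat mu *m v) s 0 = \sum_a mu s a * v (sa_idx s a) 0.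
Proof.
rewrite mxE sum_sa (bigD1 s) //= [X in _ + X]big1 ?addr0.
  by apply: eq_bigr => a _; rewrite mxE sa_colE eqxx.
by move=> s' ns'; apply: big1 => a _; rewrite mxE sa_colE (negbTE ns') mul0r.
Qed.

End Alg.
Section Lin.
Variables (R : realType) (nS nA m : nat).
Variables (Pt : 'I_nS -> 'I_nA -> 'I_nS -> R) (r : 'I_nS -> 'I_nA -> 'I_nS -> R)
  (gamma alpha : R) (Phi : 'M[R]_(nA * nS, m)) (d : 'I_nS -> 'I_nA -> R).

Lemma key_lin th ths mu :
  gfun Pt r gamma Phi d ths = 0 ->
  (forall s, Vth Phi th s - Vth Phi ths s =
     \sum_a mu s a * (qval Phi th s a - qval Phi ths s a)) ->
  th - ths + alpha *: gfun Pt r gamma Phi d th =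
  Amat Pt gamma alpha Phi d mu *m (th - ths).
Proof.
move=> hstar hmu.
have hV : Vvec Phi th - Vvec Phi ths = Pimat mu *m (Phi *m (th - ths)).
  apply/colP => s; rewrite Pimat_mul !mxE hmu; apply: eq_bigr => a _.
  by rewrite !qvalE mulmxBr [in RHS]mxE [X in _ = _ * (_ + X)]mxE.
have hg : gfun Pt r gamma Phi d th = Phi^T *m Dmat d *m
   (gamma *: (Pmat Pt *m (Vvec Phi th - Vvec Phi ths)) - Phi *m (th - ths)).
  rewrite -[LHS]subr0 -hstar /gfun -mulmxBr; congr (_ *m _).
  rewrite !mulmxBr.
  by apply/matrixP => i j; rewrite !mxE; ring.
rewrite hg hV /Amat.
rewrite !mulmxDl mul1mx mulNmx -!scalemxAl mulmxBr -!mulmxA.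
rewrite -!scalemxAr.
set u := Phi^T *m (Dmat d *m (Phi *m _)).
set v := Phi^T *m (Dmat d *m (Pmat Pt *m _)).
set x := th - ths.
by apply/matrixP => i j; rewrite !mxE; ring.
Qed.
End Lin.
Section Mean.
Variables (R : realType) (nS nA m : nat).
Variables (Pt : 'I_nS -> 'I_nA -> 'I_nS -> R) (r : 'I_nS -> 'I_nA -> 'I_nS -> R)
  (gamma : R) (Phi : 'M[R]_(nA * nS, m)) (d : 'I_nS -> 'I_nA -> R).
Hypothesis hP1 : forall s a, \sum_(s' < nS) Pt s a s' = 1.

Lemma gfun_mean th j : gfun Pt r gamma Phi d th j 0 =
  \sum_s \sum_a \sum_s' d s a * Pt s a s' * ghat r gamma Phi s a s' th j 0.
Proof.
rewrite /gfun /Dmat mul_mx_diag mxE sum_sa; apply: eq_bigr => s _.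
apply: eq_bigr => a _.
rewrite !mxE.
have hq : \sum_j0 Phi (sa_idx s a) j0 * th j0 0 = qval Phi th s a by rewrite qvalE mxE.
rewrite hq /sa_idx !mxvecE !mxE -/(sa_idx s a).
under eq_bigr => s' _ do rewrite /Pmat mxE sa_colE mxE.
rewrite /ghat /phi /Rexp.
under [RHS]eq_bigr => s' _ do rewrite !mxE.
set q := qval Phi th s a.
set ph := Phi (sa_idx s a) j.
transitivity (ph * d s a * \sum_s' (Pt s a s' * r s a s' + gamma * (Pt s a s' * Vth Phi th s') - Pt s a s' * q)).
  rewrite !big_split /= sumrN -mulr_sumr -mulr_suml hP1 mul1r.
  by [].
by rewrite mulr_sumr; apply: eq_bigr => s' _; ring.
Qed.
End Mean.
Section Proc.
Variables (R : realType) (nS nA m : nat).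
Variables (Pt : 'I_nS -> 'I_nA -> 'I_nS -> R) (r : 'I_nS -> 'I_nA -> 'I_nS -> R)
  (gamma alpha : R) (Phi : 'M[R]_(nA * nS, m)) (theta0 : 'cV[R]_m).
Variables (Omega : Type) (st : nat -> Omega -> 'I_nS) (at_ : nat -> Omega -> 'I_nA)
  (st' : nat -> Omega -> 'I_nS).

Definition T3 := ('I_nS * 'I_nA * 'I_nS)%type.

Fixpoint thH (k : nat) : {ffun 'I_k -> T3} -> 'cV[R]_m :=
  match k with
  | 0 => fun _ => theta0
  | k'.+1 => fun h =>
     let h' := [ffun t : 'I_k' => h (widen_ord (leqnSn k') t)] in
     let x := h ord_max in
     thH h' + alpha *: ghat r gamma Phi x.1.1 x.1.2 x.2 (thH h')
  end.

Lemma hist_widen k w :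
  [ffun t : 'I_k => hist st at_ st' k.+1 w (widen_ord (leqnSn k) t)] = hist st at_ st' k w.
Proof. by apply/ffunP => t; rewrite !ffunE. Qed.

Lemma thE k w : theta r gamma alpha Phi theta0 st at_ st' k w = thH (hist st at_ st' k w).
Proof.
elim: k => [|k IH] //=.
by rewrite hist_widen -IH ffunE.
Qed.

End Proc.
Section Prob.
Variables (R : realType) (nS nA : nat).
Variables (Pt : 'I_nS -> 'I_nA -> 'I_nS -> R) (d : 'I_nS -> 'I_nA -> R).
Variables (dO : measure_display) (Omega : measurableType dO) (PP : probability Omega R).
Variables (st : nat -> Omega -> 'I_nS) (at_ : nat -> Omega -> 'I_nA)
  (st' : nat -> Omega -> 'I_nS).
Hypotheses (hst : forall t i, measurable [set w | st t w = i])
  (hat : forall t i, measurable [set w | at_ t w = i])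
  (hst' : forall t i, measurable [set w | st' t w = i]).
Hypothesis hlaw : forall (k : nat) (x : 'I_k -> 'I_nS) (y : 'I_k -> 'I_nA) (z : 'I_k -> 'I_nS),
      PP [set w | forall t : 'I_k, st t w = x t /\ at_ t w = y t /\ st' t w = z t]
      = (\prod_(t < k) (d (x t) (y t) * Pt (x t) (y t) (z t)))%:E.

Lemma meas_forall n (S : 'I_n -> set Omega) :
  (forall t, measurable (S t)) -> measurable [set w | forall t, S t w].
Proof.
elim: n S => [|n IH] S mS.
  rewrite (_ : [set w | _] = setT) //.
  by apply/seteqP; split => // w _ [].
rewrite (_ : [set w | _] = S ord0 `&` [set w | forall t : 'I_n, S (lift ord0 t) w]).
  by apply: measurableI => //; apply: IH.
apply/seteqP; split => w /=.
  by move=> H; split => // t; apply: H.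
by move=> [H0 H] t; case: (unliftP ord0 t) => [t'|] ->.
Qed.

Definition samp k w : T3 nS nA := (st k w, at_ k w, st' k w).

Definition Ev k (p : {ffun 'I_k -> T3 nS nA} * T3 nS nA) : set Omega :=
  [set w | hist st at_ st' k w = p.1 /\ samp k w = p.2].

Definition qd (x : T3 nS nA) : R := d x.1.1 x.1.2 * Pt x.1.1 x.1.2 x.2.

Definition ext k (p : {ffun 'I_k -> T3 nS nA} * T3 nS nA) (t : 'I_k.+1) : T3 nS nA :=
  match unlift ord_max t with Some t' => p.1 t' | None => p.2 end.

Lemma Ev_eq k p : Ev p = [set w | forall t : 'I_k.+1,
   st t w = (ext p t).1.1 /\ at_ t w = (ext p t).1.2 /\ st' t w = (ext p t).2].
Proof.
apply/seteqP; split => w /=.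
  move=> [h1 h2] t; rewrite /ext; case: (unliftP ord_max t) => [t'|] ->.
    rewrite -h1 ffunE /=. have -> : bump k t' = t' by rewrite /bump leqNgt ltn_ord. by [].
  by rewrite -h2.
move=> H; split.
  apply/ffunP => t; rewrite ffunE.
  move: (H (lift ord_max t)); rewrite /ext liftK lift_max.
  by case: (p.1 t) => [[x y] z] /= [-> [-> ->]].
move: (H ord_max); rewrite /ext unlift_none /samp.
by case: p.2 => [[x y] z] /= [-> [-> ->]].
Qed.

Lemma Ev_meas k p : measurable (@Ev k p).
Proof.
rewrite Ev_eq; apply: meas_forall => t.
apply: (@measurableI _ _ [set w | st t w = (ext p t).1.1]
   ([set w | at_ t w = (ext p t).1.2] `&` [set w | st' t w = (ext p t).2])) => //.
exact: measurableI.
Qed.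

Lemma Ev_law k p : PP (@Ev k p) = ((\prod_(t < k) qd (p.1 t)) * qd p.2)%:E.
Proof.
rewrite Ev_eq hlaw big_ord_recr /= /ext unlift_none.
congr ((_ * _)%:E); apply: eq_bigr => t _.
have -> : widen_ord (leqnSn k) t = lift ord_max t by apply: val_inj; rewrite /= /bump leqNgt ltn_ord.
by rewrite liftK.
Qed.


Lemma int_simple k (c : {ffun 'I_k -> T3 nS nA} * T3 nS nA -> R) :
  PP.-integrable setT (fun w => (\sum_p c p * \1_(Ev p) w)%:E) /\
  (\int[PP]_w (\sum_p c p * \1_(Ev p) w)%:E = \sum_p (c p)%:E * PP (Ev p))%E.
Proof.
have eqf : (fun w => (\sum_p c p * \1_(Ev p) w)%:E) =
    (fun w => \sum_p (c p)%:E * (\1_(Ev p) w)%:E)%E.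
  by apply/funext => w; rewrite sumEFin.
have hi : forall p, PP.-integrable setT (fun w => ((c p)%:E * (\1_(Ev p) w)%:E)%E).
  by move=> p; apply: (integrableZl measurableT); apply: integrable_indic; exact: Ev_meas.
rewrite eqf; split.
  by apply: (integrable_sum measurableT) => p _; exact: hi.
rewrite (integral_sum measurableT) //; apply: eq_bigr => p _.
rewrite (integralZl measurableT) //; last by apply: integrable_indic; exact: Ev_meas.
by rewrite integral_indic ?setIT //; exact: Ev_meas.
Qed.

Lemma sum_indic k (F : {ffun 'I_k -> T3 nS nA} -> T3 nS nA -> R) w :
  F (hist st at_ st' k w) (samp k w) = \sum_p F p.1 p.2 * \1_(Ev p) w.
Proof.
rewrite (bigD1 (hist st at_ st' k w, samp k w)) //= indicE mem_set // mulr1.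
rewrite big1 ?addr0 // => p hp.
rewrite indicE memNset ?mulr0 // => -[h1 h2].
by move: hp; rewrite h1 h2 -surjective_pairing eqxx.
Qed.

End Prob.
Lemma mxBE (R : realType) p q (A B : 'M[R]_(p, q)) i j : (A - B) i j = A i j - B i j.
Proof. by rewrite !mxE. Qed.

Lemma sum_delta (R : realType) n (F : 'I_n -> R) (a1 : 'I_n) :
  \sum_a (a == a1)%:R * F a = F a1.
Proof.
rewrite (bigD1 a1) //= eqxx mul1r big1 ?addr0 // => b /negbTE ->.
by rewrite mul0r.
Qed.

Lemma sumT3 (R : realType) nS nA (F : T3 nS nA -> R) :
  \sum_x F x = \sum_s \sum_a \sum_s' F (s, a, s').
Proof.
have E1 : \sum_s \sum_a \sum_s' F (s, a, s') =
  \sum_(sa : 'I_nS * 'I_nA) \sum_s' F (sa.1, sa.2, s') :=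
  pair_bigA _ (fun s a => \sum_s' F (s, a, s')).
have E2 : \sum_(sa : 'I_nS * 'I_nA) \sum_s' F (sa.1, sa.2, s') =
  \sum_(x : ('I_nS * 'I_nA) * 'I_nS) F (x.1.1, x.1.2, x.2) :=
  pair_bigA _ (fun sa s' => F (sa.1, sa.2, s')).
by rewrite E1 E2; apply: eq_bigr => -[[s a] s'].
Qed.

Section Pol.
Variables (R : realType) (nS nA m : nat) (Phi : 'M[R]_(nA * nS, m)) (ths : 'cV[R]_m).
Hypothesis nA0 : (0 < nA)%N.

Definition amax (f : 'I_nA -> R) : 'I_nA := proj1_sig (cid (fmax_ex f nA0)).
Lemma amaxP f : fmax f = f (amax f) /\ forall b, f b <= f (amax f).
Proof. exact: (proj2_sig (cid (fmax_ex f nA0))). Qed.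

Definition lam (th : 'cV[R]_m) (s : 'I_nS) : R :=
  let dl := fun b => qval Phi th s b - qval Phi ths s b in
  let a1 := amax (qval Phi th s) in
  let a2 := amax (qval Phi ths s) in
  if dl a1 == dl a2 then 1
  else (Vth Phi th s - Vth Phi ths s - dl a2) / (dl a1 - dl a2).

Definition Mpol (th : 'cV[R]_m) (s : 'I_nS) (a : 'I_nA) : R :=
  lam th s * (a == amax (qval Phi th s))%:R
  + (1 - lam th s) * (a == amax (qval Phi ths s))%:R.

Lemma Mpol_spec th : is_stoch_policy (Mpol th) /\
  forall s, Vth Phi th s - Vth Phi ths s =
     \sum_a Mpol th s a * (qval Phi th s a - qval Phi ths s a).
Proof.
have H : forall s, 0 <= lam th s <= 1 /\ Vth Phi th s - Vth Phi ths s =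
  lam th s * (qval Phi th s (amax (qval Phi th s)) - qval Phi ths s (amax (qval Phi th s)))
  + (1 - lam th s) * (qval Phi th s (amax (qval Phi ths s)) - qval Phi ths s (amax (qval Phi ths s))).
  move=> s; rewrite /lam /Vth.
  have [e1 h1] := amaxP (qval Phi th s).
  have [e2 h2] := amaxP (qval Phi ths s).
  set a1 := amax (qval Phi th s) in e1 h1 *.
  set a2 := amax (qval Phi ths s) in e2 h2 *.
  rewrite e1 e2.
  have l1 := h2 a1. have l2 := h1 a2.
  case: eqP => hq.
    split; first by rewrite ler01 lexx.
    rewrite subrr mul0r addr0 mul1r.
    apply/eqP; rewrite eq_le; apply/andP; split; first by lra.
    move: hq => /eqP; rewrite -subr_eq0 => /eqP hq; lra.
  have hpos : 0 < qval Phi th s a1 - qval Phi ths s a1 - (qval Phi th s a2 - qval Phi ths s a2).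
    have : qval Phi th s a2 - qval Phi ths s a2 <= qval Phi th s a1 - qval Phi ths s a1 by lra.
    rewrite le_eqVlt => /orP[/eqP h|h]; first by exfalso; apply: hq; rewrite h.
    by rewrite subr_gt0.
  split.
    apply/andP; split; first by apply: divr_ge0; lra.
    by rewrite ler_pdivrMr // mul1r; lra.
  by field; lra.
split; first split.
- move=> s a; have [/andP [h0 h1] _] := H s; rewrite /Mpol.
  by apply: addr_ge0; apply: mulr_ge0; rewrite ?subr_ge0 ?ler0n.
- move=> s; rewrite /Mpol big_split /= -!mulr_sumr.
  rewrite (eq_bigr (fun a => (a == amax (qval Phi th s))%:R * 1)); last by move=> a _; rewrite mulr1.
  rewrite sum_delta.
  rewrite (eq_bigr (fun a => (a == amax (qval Phi ths s))%:R * 1)); last by move=> a _; rewrite mulr1.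
  by rewrite sum_delta; ring.
- move=> s; have [_ ->] := H s; rewrite /Mpol.
  under eq_bigr => a _ do rewrite mulrDl -!mulrA.
  by rewrite big_split /= -!mulr_sumr !sum_delta.
Qed.
End Pol.
Unset Implicit Arguments.
Theorem proposition2
  (R : realType) (nS nA m : nat)
  (* MDP *)
  (Pt : 'I_nS -> 'I_nA -> 'I_nS -> R) (r : 'I_nS -> 'I_nA -> 'I_nS -> R)
  (gamma : R)
  (hP0 : forall s a s', 0 <= Pt s a s')
  (hP1 : forall s a, \sum_(s' < nS) Pt s a s' = 1)
  (hgamma : 0 < gamma < 1)
  (* features *)
  (Phi : 'M[R]_(nA * nS, m)) (hPhi : \rank Phi = m)
  (* sampling distribution *)
  (d : 'I_nS -> 'I_nA -> R)
  (hd0 : forall s a, 0 < d s a)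
  (hd1 : \sum_(s < nS) \sum_(a < nA) d s a = 1)
  (* step size *)
  (alpha : R) (halpha : 0 < alpha < 1)
  (* joint spectral radius < 1 *)
  (hjsr : jsr Pt gamma alpha Phi d < 1)
  (* projected Bellman fixed point *)
  (theta_star : 'cV[R]_m)
  (hstar : gfun Pt r gamma Phi d theta_star = 0)
  (* i.i.d. sampling on a probability space *)
  (dO : measure_display) (Omega : measurableType dO) (PP : probability Omega R)
  (theta0 : 'cV[R]_m)
  (st : nat -> Omega -> 'I_nS) (at_ : nat -> Omega -> 'I_nA)
  (st' : nat -> Omega -> 'I_nS)
  (hst : forall t i, measurable [set w | st t w = i])
  (hat : forall t i, measurable [set w | at_ t w = i])
  (hst' : forall t i, measurable [set w | st' t w = i])
  (hlaw : forall (k : nat) (x : 'I_k -> 'I_nS) (y : 'I_k -> 'I_nA) (z : 'I_k -> 'I_nS),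
      PP [set w | forall t : 'I_k, st t w = x t /\ at_ t w = y t /\ st' t w = z t]
      = (\prod_(t < k) (d (x t) (y t) * Pt (x t) (y t) (z t)))%:E) :
  let th := theta r gamma alpha Phi theta0 st at_ st' in
  let wk := fun (k : nat) (w : Omega) =>
      ghat r gamma Phi (st k w) (at_ k w) (st' k w) (th k w)
      - gfun Pt r gamma Phi d (th k w) in
  exists mu : nat -> Omega -> 'I_nS -> 'I_nA -> R,
    (forall k w, is_stoch_policy (mu k w)) /\
    (forall k s a, F_measurable st at_ st' k (fun w => mu k w s a)) /\
    (forall k w, th k.+1 w - theta_star
                 = Amat Pt gamma alpha Phi d (mu k w) *m (th k w - theta_star)
                   + alpha *: wk k w) /\
    (forall k (j : 'I_m),
        PP.-integrable setT (fun w => (wk k w j 0)%:E) /\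
        (forall A, inF st at_ st' k A ->
           (\int[PP]_(w in A) (wk k w j 0)%:E = 0)%E)).
Proof.
move=> th wk.
have nA0 : (0 < nA)%N.
  case: (posnP nA) => [hn|//]; move: hd1.
  rewrite big1 => [/eqP|s _]; first by rewrite eq_sym oner_eq0.
  by apply: big1 => a _; have := ltn_ord a; move: (nat_of_ord a) => n; rewrite hn.
pose Th := fun k (h : {ffun 'I_k -> T3 nS nA}) => thH r gamma alpha Phi theta0 h.
pose mu := fun k w => Mpol Phi theta_star nA0 (Th k (hist st at_ st' k w)).
exists mu; split; [|split; [|split]].
- by move=> k w; case: (Mpol_spec Phi theta_star nA0 (Th k (hist st at_ st' k w))).
- move=> k s a B _.
  by exists (fun h => B (Mpol Phi theta_star nA0 (Th k h) s a)).
- move=> k w; rewrite /wk /th /= !thE.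
  have [_ hs] := Mpol_spec Phi theta_star nA0 (Th k (hist st at_ st' k w)).
  rewrite -(key_lin alpha hstar hs) /Th.
  move: (thH _ _ _ _ _ _) => x.
  move: (ghat _ _ _ _ _ _ _) (gfun _ _ _ _ _ _) => G1 G2.
  by apply/matrixP => i j; rewrite !mxE; ring.
- move=> k j.
  pose G := fun (h : {ffun 'I_k -> T3 nS nA}) (x : T3 nS nA) =>
    (ghat r gamma Phi x.1.1 x.1.2 x.2 (Th k h) - gfun Pt r gamma Phi d (Th k h)) j 0.
  have hG : forall w, wk k w j 0 = G (hist st at_ st' k w) (samp st at_ st' k w).
    by move=> w; rewrite /wk /th /G /= thE.
  have hf : forall w, wk k w j 0 = \sum_p G p.1 p.2 * \1_(Ev st at_ st' p) w.
    by move=> w; rewrite -(sum_indic st at_ st' G w).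
  have [hi _] := int_simple PP hst hat hst' (fun p => G p.1 p.2).
  split.
    by apply: (eq_integrable measurableT _ _ _ hi) => w _; rewrite hf.
  move=> A [B ->].
  pose c := fun p : {ffun 'I_k -> T3 nS nA} * T3 nS nA =>
    if `[< B p.1 >] then G p.1 p.2 else 0.
  rewrite integral_mkcond.
  have -> : ((fun w => (wk k w j 0)%:E) \_ [set w | B (hist st at_ st' k w)]) =
      (fun w => (\sum_p c p * \1_(Ev st at_ st' p) w)%:E).
    apply/funext => w; rewrite patchE.
    rewrite -(sum_indic st at_ st' (fun h x => if `[< B h >] then G h x else 0) w).
    case: ifPn => hw.
      by rewrite in_setE /= in hw; rewrite asboolT // hG.
    rewrite notin_setE /= in hw.
    by rewrite asboolF.
  have [_ ->] := int_simple PP hst hat hst' c.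
  under eq_bigr => p _ do rewrite (Ev_law hlaw) -EFinM.
  rewrite sumEFin; congr (_%:E).
  transitivity (\sum_h \sum_x c (h, x) * (\prod_(t < k) qd Pt d (h t) * qd Pt d x)).
    by rewrite pair_bigA; apply: eq_bigr => -[h x] _.
  apply: big1 => h _; rewrite /c /=; case: asboolP => hB; last first.
    by apply: big1 => x _; rewrite mul0r.
  under eq_bigr => x _ do rewrite mulrCA.
  rewrite -mulr_sumr; apply/eqP; rewrite mulf_eq0; apply/orP; right; apply/eqP.
  have S1 : \sum_x qd Pt d x = 1.
    rewrite sumT3 -hd1; apply: eq_bigr => s _; apply: eq_bigr => a _.
    by rewrite /qd /= -mulr_sumr hP1 mulr1.
  have S2 : \sum_x ghat r gamma Phi x.1.1 x.1.2 x.2 (Th k h) j 0 * qd Pt d x =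
      gfun Pt r gamma Phi d (Th k h) j 0.
    rewrite sumT3 (gfun_mean r gamma Phi d hP1); apply: eq_bigr => s _.
    by apply: eq_bigr => a _; apply: eq_bigr => s' _; rewrite mulrC.
  rewrite /G.
  under eq_bigr => x _ do rewrite mxBE mulrBl.
  by rewrite sumrB S2 -mulr_sumr S1 mulr1 subrr.
Qed.
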